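(* Let $k\in\mathbb{Z}_{\geqslant 2}$. Then for all $n\in\mathbb{Z}_{\geqslant 1}$ and all $0<\varepsilon\leqslant\frac{k-1}{6}$, $$\tau_k(n)\leqslant \min\left(k^{\Omega(n)},\ \left(\tfrac{3(k-1)}{5\varepsilon}\right)^{k^{1/\varepsilon}(k-1)} n^{\varepsilon}\right).$$
   Context: $\tau_k(n)$ is the number of ordered $k$-tuples of positive integers with product $n$; $\Omega(n)$ is the number of prime factors of $n$ counted with multiplicity. *)

(* Defs.v *)
From Stdlib Require Import Reals.
From mathcomp Require Import all_boot.
Set Implicit Arguments. Unset Strict Implicit. Unset Printing Implicit Defensive.

(* tau_k(n): number of ordered k-tuples of positive integers with product n.
   For n >= 1 every entry of such a tuple divides n, hence lies in [1, n],
   so the tuples are enumerated inside k.-tuple 'I_n.+1. *)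
Definition tau (k n : nat) : nat :=
  #|[set t : k.-tuple 'I_n.+1 |
      all (fun i : 'I_n.+1 => 0 < val i) t && (\prod_(i <- t) val i == n)]|.

Definition Omega (n : nat) : nat := \sum_(p <- primes n) logn p n.

(* Main.v *)
Require Import Defs.
From Stdlib Require Import Reals Lra Psatz.
From mathcomp Require Import all_boot zify.

Module CombM.
Set Implicit Arguments. Unset Strict Implicit. Unset Printing Implicit Defensive.

Definition Sk (k n : nat) := [set t : k.-tuple 'I_n.+1 |
      all (fun i : 'I_n.+1 => 0 < val i) t && (\prod_(i <- t) val i == n)].

Lemma tauE k n : tau k n = #|Sk k n|.
Proof. by []. Qed.

Lemma memSk k n (t : k.-tuple 'I_n.+1) :
  (t \in Sk k n) <-> ((forall i, 0 < val (tnth t i)) /\ \prod_(i < k) val (tnth t i) = n).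
Proof.
rewrite inE big_tuple; split.
  by case/andP => /all_tnthP H /eqP ->.
by case=> H ->; rewrite eqxx andbT; apply/all_tnthP.
Qed.

Lemma dvd_prod_ord k (x : 'I_k -> nat) i : x i %| \prod_(j < k) x j.
Proof. by rewrite (bigD1 i) //= dvdn_mulr. Qed.

Definition mk k m (x : 'I_k -> nat) : k.-tuple 'I_m.+1 := [tuple inord (x i) | i < k].

Lemma mk_val k m (x : 'I_k -> nat) i : x i <= m -> val (tnth (mk m x) i) = x i.
Proof. by move=> h; rewrite tnth_mktuple /= inordK. Qed.

Lemma mk_bound k m (x : 'I_k -> nat) i : (forall i, 0 < x i) -> \prod_(j < k) x j = m -> x i <= m.
Proof.
move=> hp hm; apply: dvdn_leq; last by rewrite -hm dvd_prod_ord.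
by rewrite -hm prodn_gt0.
Qed.

Lemma mkSv k m (x : 'I_k -> nat) i : (forall i, 0 < x i) -> \prod_(j < k) x j = m ->
  val (tnth (mk m x) i) = x i.
Proof. by move=> hp hm; rewrite mk_val //; apply: mk_bound. Qed.

Lemma mkS k m (x : 'I_k -> nat) : (forall i, 0 < x i) -> \prod_(j < k) x j = m ->
  mk m x \in Sk k m.
Proof.
move=> hp hm; apply/memSk; split.
  by move=> i; rewrite (mkSv i hp hm).
by rewrite -[RHS]hm; apply: eq_bigr => i _; rewrite (mkSv i hp hm).
Qed.

Lemma tau1 k : tau k 1 <= 1.
Proof.
rewrite tauE; apply/card_le1_eqP => t1 t2 /memSk [p1 h1] /memSk [p2 h2].
have one : forall (t : k.-tuple 'I_2) i, \prod_(j < k) val (tnth t j) = 1 -> val (tnth t i) = 1.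
  move=> t i h; apply/eqP; rewrite -dvdn1.
  by apply: (dvdn_trans (dvd_prod_ord (fun j => val (tnth t j)) i)); rewrite h.
by apply: eq_from_tnth => i; apply: val_inj; rewrite (one _ _ h1) (one _ _ h2).
Qed.

Lemma prime_dvd_prod_ord k p (x : 'I_k -> nat) : prime p -> p %| \prod_(i < k) x i ->
  exists i, p %| x i.
Proof.
move=> pp hd; case: (boolP [exists i, p %| x i]) => [/existsP // | /existsPn hn].
exfalso; move: hd; apply/negP.
apply: (big_ind (fun y => ~~ (p %| y))).
- by rewrite dvdn1; apply/eqP => e; move: (prime_gt1 pp); rewrite e.
- by move=> a b ha hb; rewrite Euclid_dvdM // negb_or ha hb.
- by move=> i _; apply: hn.
Qed.

Lemma taub k p m : prime p -> 0 < m -> tau k (p * m) <= k * tau k m.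
Proof.
move=> pp m0; rewrite !tauE.
pose o (t : k.-tuple 'I_(p*m).+1) := [pick i | p %| val (tnth t i)].
pose x (t : k.-tuple 'I_(p*m).+1) j := if Some j == o t then val (tnth t j) %/ p else val (tnth t j).
pose f t := (o t, mk m (x t)).
have key : forall t, t \in Sk k (p*m) -> exists2 i, o t = Some i & p %| val (tnth t i).
  move=> t /memSk [hp hprod]; rewrite /o; case: pickP => [i hi|h]; first by exists i.
  have [i hi] : exists i, p %| val (tnth t i).
    by apply: (prime_dvd_prod_ord (x := fun i => val (tnth t i))) => //; rewrite hprod dvdn_mulr.
  by move: (h i); rewrite hi.
have xprop : forall t, t \in Sk k (p*m) -> (forall j, 0 < x t j) /\ \prod_(j < k) x t j = m.
  move=> t ht; have [i oi hi] := key t ht; move/memSk: ht => [hp hprod].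
  have xE : forall j, x t j = if j == i then val (tnth t j) %/ p else val (tnth t j).
    by move=> j; rewrite /x oi.
  split.
    move=> j; rewrite xE; case: eqP => [->|_]; last exact: hp.
    by rewrite divn_gt0 ?prime_gt0 // dvdn_leq.
  rewrite (bigD1 i) //= xE eqxx.
  have -> : \prod_(j < k | j != i) x t j = \prod_(j < k | j != i) val (tnth t j).
    by apply: eq_bigr => j /negbTE hj; rewrite xE hj.
  move: hprod; rewrite (bigD1 i) //=.
  move: hi => /dvdnP [q ->]; rewrite mulnK ?prime_gt0 // -mulnA [p * _]mulnC => /eqP.
  by rewrite mulnA mulnC eqn_pmul2l ?prime_gt0 // => /eqP.
have finj : {in Sk k (p*m) &, injective f}.
  move=> t1 t2 h1 h2 E.
  have eo : o t1 = o t2 := congr1 fst E.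
  have emk : mk m (x t1) = mk m (x t2) := congr1 snd E.
  have [i oi hi] := key t1 h1; have [i2 oi2 hi2] := key t2 h2.
  move: oi2; rewrite -eo oi => -[ei]; subst i2.
  have [xp1 xm1] := xprop t1 h1; have [xp2 xm2] := xprop t2 h2.
  apply: eq_from_tnth => j; apply: val_inj.
  have := congr1 (fun t => val (tnth t j)) emk => /=.
  rewrite (mkSv j xp1 xm1) (mkSv j xp2 xm2) /x -eo oi.
  case: eqP => [[ji]|_] //; subst j.
  by move=> e; rewrite -(divnK hi) -(divnK hi2) e.
rewrite -(card_in_imset finj).
apply: (leq_trans (subset_leq_card (B := setX [set Some i | i : 'I_k] (Sk k m)) _)).
  apply/subsetP => y /imsetP [t ht ->]; apply/setXP; split.
    by have [i oi _] := key t ht; rewrite /= oi imset_f.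
  by have [xp xm] := xprop t ht; exact: mkS.
by rewrite cardsX card_imset ?cardsT ?card_ord //; move=> a b [].
Qed.

Lemma prod_partn k (pi : nat_pred) (x : 'I_k -> nat) : (forall i, 0 < x i) ->
  \prod_(i < k) (x i)`_pi = (\prod_(i < k) x i)`_pi.
Proof.
move=> hp.
have [] : 0 < \prod_(i < k) x i /\ \prod_(i < k) (x i)`_pi = (\prod_(i < k) x i)`_pi => //.
apply: (big_ind2 (fun a b => 0 < b /\ a = b`_pi)).
- by rewrite partn1.
- by move=> a b c d [b0 ->] [d0 ->]; rewrite muln_gt0 b0 d0 partnM.
- by move=> i _; rewrite hp.
Qed.

Lemma tauc k (pi : nat_pred) n : 0 < n -> tau k n <= tau k n`_pi * tau k n`_pi^'.
Proof.
move=> n0; rewrite !tauE.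
pose f (t : k.-tuple 'I_n.+1) :=
  (mk n`_pi (fun i => (val (tnth t i))`_pi), mk n`_pi^' (fun i => (val (tnth t i))`_pi^')).
have xprop : forall t, t \in Sk k n -> forall pi' : nat_pred,
    (forall j, 0 < (val (tnth t j))`_pi') /\ \prod_(j < k) (val (tnth t j))`_pi' = n`_pi'.
  move=> t /memSk [hp hprod] pi'; split; first by move=> j; rewrite part_gt0.
  by rewrite prod_partn // hprod.
have finj : {in Sk k n &, injective f}.
  move=> t1 t2 h1 h2 E.
  have e1 : mk n`_pi (fun i => (val (tnth t1 i))`_pi) = mk n`_pi (fun i => (val (tnth t2 i))`_pi)
    := congr1 fst E.
  have e2 : mk n`_pi^' (fun i => (val (tnth t1 i))`_pi^') = mk n`_pi^' (fun i => (val (tnth t2 i))`_pi^')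
    := congr1 snd E.
  have [a1 b1] := xprop t1 h1 pi; have [a2 b2] := xprop t2 h2 pi.
  have [c1 d1] := xprop t1 h1 pi^'; have [c2 d2] := xprop t2 h2 pi^'.
  move/memSk: h1 => [hp1 _]; move/memSk: h2 => [hp2 _].
  apply: eq_from_tnth => j; apply: val_inj.
  have := congr1 (fun t => val (tnth t j)) e1; rewrite /= (mkSv j a1 b1) (mkSv j a2 b2) => q1.
  have := congr1 (fun t => val (tnth t j)) e2; rewrite /= (mkSv j c1 d1) (mkSv j c2 d2) => q2.
  by rewrite -(partnC pi (hp1 j)) -(partnC pi (hp2 j)) q1 q2.
rewrite -cardsX -(card_in_imset finj); apply: subset_leq_card.
apply/subsetP => y /imsetP [t ht ->]; apply/setXP; split.
  by have [a b] := xprop t ht pi; exact: mkS.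
by have [a b] := xprop t ht pi^'; exact: mkS.
Qed.

Lemma taud k p a : prime p -> tau k.+1 (p ^ a) <= a.+1 ^ k.
Proof.
move=> pp; rewrite tauE.
pose f (t : k.+1.-tuple 'I_(p ^ a).+1) : k.-tuple 'I_a.+1 :=
  [tuple inord (logn p (val (tnth t (lift ord0 i)))) | i < k].
have ent : forall t, t \in Sk k.+1 (p ^ a) -> forall j,
    logn p (val (tnth t j)) <= a /\ val (tnth t j) = p ^ (logn p (val (tnth t j))).
  move=> t /memSk [hp hprod] j.
  have : val (tnth t j) %| p ^ a.
    by apply: (dvdn_trans (dvd_prod_ord (fun j => val (tnth t j)) j)); rewrite hprod.
  by case/(dvdn_pfactor _ _ pp) => m hm ->; rewrite pfactorK.
have finj : {in Sk k.+1 (p ^ a) &, injective f}.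
  move=> t1 t2 h1 h2 E.
  have e : forall i, tnth t1 (lift ord0 i) = tnth t2 (lift ord0 i).
    move=> i; have := congr1 (fun t => val (tnth t i)) E; rewrite /f !tnth_mktuple /=.
    have [l1 v1] := ent t1 h1 (lift ord0 i); have [l2 v2] := ent t2 h2 (lift ord0 i).
    rewrite !inordK // => q; apply: val_inj; by rewrite v1 v2 q.
  have e0 : tnth t1 ord0 = tnth t2 ord0.
    move/memSk: h1 => [hp1 p1]; move/memSk: h2 => [hp2 p2].
    move: p1 p2; rewrite !big_ord_recl.
    have -> : \prod_(i < k) val (tnth t1 (lift ord0 i)) = \prod_(i < k) val (tnth t2 (lift ord0 i)).
      by apply: eq_bigr => i _; rewrite e.
    move=> q1 q2; have := etrans q1 (esym q2); move/eqP; rewrite eqn_pmul2r; first by move/eqP => q; apply: val_inj.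
    by rewrite prodn_gt0.
  apply: eq_from_tnth => j; case: (unliftP ord0 j) => [i ->|->] //.
have := @leq_card_in _ _ f _ finj; rewrite card_tuple card_ord. done.
Qed.

Lemma taupow k p a : prime p -> tau k (p ^ a) <= k ^ a.
Proof.
move=> pp; elim: a => [|a IH]; first exact: tau1.
rewrite expnS; have h0 : 0 < p ^ a by rewrite expn_gt0 prime_gt0.
apply: (leq_trans (taub k pp h0)); rewrite expnS; by rewrite leq_mul2l IH orbT.
Qed.

Lemma part_lt n : 1 < n -> 0 < n`_(pdiv n)^' /\ n`_(pdiv n)^' < n.
Proof.
move=> n1; have n0 : 0 < n by apply: ltnW.
split; first exact: part_gt0.
have pp := pdiv_prime n1.
have hl : 0 < logn (pdiv n) n by rewrite logn_gt0 -pi_pdiv in n1 *.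
have E := partnC (pdiv n) n0.
rewrite -[X in _ < X]E p_part -[X in X < _]mul1n ltn_mul2r part_gt0 /=.
by rewrite -(expn0 (pdiv n)) ltn_exp2l ?prime_gt1.
Qed.

Lemma part_ind (P : nat -> Prop) : P 1 ->
  (forall n, 1 < n -> P (n`_(pdiv n)^') -> P n) -> forall n, 0 < n -> P n.
Proof.
move=> P1 Ps n; elim: n {-2}n (leqnn n) => [|N IH] n hn n0; first by case: n hn n0.
case: (ltngtP n 1) => [|n1|->] //; first by case: n n0 {hn}.
apply: Ps => //; have [a b] := part_lt n1; apply: IH => //.
by rewrite -ltnS; apply: leq_trans hn.
Qed.

Lemma sum_primes_part (F : nat -> nat) n : 1 < n ->
  \sum_(q <- primes n) F q = F (pdiv n) + \sum_(q <- primes n`_(pdiv n)^') F q.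
Proof.
move=> n1; rewrite primes_part big_filter (bigD1_seq (pdiv n)) ?primes_uniq //.
by rewrite -pi_pdiv in n1.
Qed.

Lemma Omega1 : Omega 1 = 0.
Proof. by rewrite /Omega big_nil. Qed.

Lemma Omega_part n : 1 < n -> Omega n = logn (pdiv n) n + Omega (n`_(pdiv n)^').
Proof.
move=> n1; rewrite /Omega sum_primes_part //; congr (_ + _).
apply: eq_big_seq => q; rewrite primes_part mem_filter => /andP [hq _].
have n0 : 0 < n by apply: ltnW.
rewrite -{1}(partnC (pdiv n) n0) lognM ?part_gt0 // p_part lognX (logn_prime q (pdiv_prime n1)).
move: hq; rewrite !inE => /negbTE ->; by rewrite muln0.
Qed.

Theorem part1 k n : 0 < n -> tau k n <= k ^ Omega n.
Proof.
move: n; apply: part_ind; first by rewrite Omega1 tau1.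
move=> n n1 IH; have n0 : 0 < n by apply: ltnW.
apply: (leq_trans (tauc k (pdiv n) n0)).
rewrite Omega_part // expnD leq_mul // p_part taupow // pdiv_prime //.
Qed.

End CombM.
Import CombM.

Module RAM.
Local Open Scope R_scope.

Lemma A3 (u y : R) : 6 <= u -> 0 <= y -> 1 + y * u <= (3 * u / 5) * (1 + y / 2) ^ 2.
Proof. intros hu hy.
assert (h : 0 <= u * (3/20 * (y - 4/3)^2)). { apply Rmult_le_pos. lra. apply Rmult_le_pos. lra. apply pow2_ge_0. }
assert (e : (3 * u / 5) * (1 + y / 2) ^ 2 - (1 + y * u) = u * (3/20 * (y - 4/3)^2) + (u/3 - 1)) by (simpl; field).
lra. Qed.

Lemma A2 (u y : R) : 6 <= u -> 0 <= y -> 1 + y * u <= (3 * u / 5) ^ 2 * (1 + y / 2).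
Proof. intros hu hy. simpl.
assert (h1: 0 <= y * u * (9*u/50 - 1)). { apply Rmult_le_pos. nra. lra. }
assert (h2: 1 <= (3*u/5)*(3*u/5)) by nra.
nra. Qed.

Lemma exp2 (y : R) : 0 <= y -> 1 + y / 2 <= exp (y * ln 2).
Proof. intros hy. pose proof ln_lt_2. pose proof (exp_ineq1_le (y * ln 2)). nra. Qed.

Lemma expq (y L : R) : 0 <= y -> 1 <= L -> (1 + y / 2) ^ 2 <= exp (y * L).
Proof. intros hy hL.
replace (y * L) with (y * L / 2 + y * L / 2) by field.
rewrite exp_plus. pose proof (exp_ineq1_le (y * L / 2)).
simpl. rewrite Rmult_1_r. apply Rmult_le_compat; nra.
Qed.

Lemma ln_ge1 (q : R) : 3 <= q -> 1 <= ln q.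
Proof. intros h. pose proof exp_le_3. rewrite <- (ln_exp 1).
destruct (Rle_lt_or_eq_dec (exp 1) q) as [l|e]; [lra| |].
- left; apply ln_increasing; [apply exp_pos|exact l].
- rewrite e; lra.
Qed.

End RAM.
Import RAM.

Local Open Scope R_scope.

Definition cw (K : R) (q : nat) : nat :=
  if Rlt_dec (INR q) K then (if q == 2%N then 2 else 1)%N else 0%N.
Definition Cs (K : R) (n : nat) : nat := (\sum_(q <- primes n) cw K q)%N.

Lemma INR_le (m n : nat) : (m <= n)%N -> INR m <= INR n.
Proof. by move/leP; apply: le_INR. Qed.

Lemma INR_muln (m n : nat) : INR (m * n)%N = INR m * INR n.
Proof. by rewrite -mult_INR. Qed.

Lemma INR_expn (m n : nat) : INR (m ^ n)%N = INR m ^ n.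
Proof. elim: n => [|n IH] //=; by rewrite expnS INR_muln IH. Qed.

Lemma exp_powR (z : R) (n : nat) : exp z ^ n = exp (INR n * z).
Proof. rewrite -Rpower_pow; last exact: exp_pos. by rewrite /Rpower ln_exp. Qed.

Lemma PP (k : nat) (hk : (2 <= k)%N) (eps : R) (heps0 : 0 < eps) (heps1 : eps <= (INR k - 1) / 6)
  p (pp : prime p) (a : nat) :
  INR (tau k (p ^ a)) <= (3 * (INR k - 1) / (5 * eps)) ^ (k.-1 * cw (Rpower (INR k) (1 / eps)) p)%N
     * Rpower (INR (p ^ a)) eps.
Proof.
have p2 : 2 <= INR p by have := INR_le _ _ (prime_gt1 pp).
have k2 : 2 <= INR k by have := INR_le _ _ hk.
have hu : 6 <= (INR k - 1) / eps.
  apply: (Rmult_le_reg_r eps) => //; rewrite /Rdiv Rmult_assoc Rinv_l; lra.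
set u := (INR k - 1) / eps in hu *.
have Bu : 3 * (INR k - 1) / (5 * eps) = 3 * u / 5 by rewrite /u; field; lra.
rewrite Bu.
have E : Rpower (INR (p ^ a)) eps = exp (eps * (INR a * ln (INR p))).
  by rewrite /Rpower INR_expn ln_pow //; lra.
rewrite E /cw; case: Rlt_dec => hK /=.
- have [k' ek] : exists k', k = k'.+1 by case: (k) hk => [|k'] //; exists k'.
  rewrite ek succnK.
  apply: (Rle_trans _ _ _ (INR_le _ _ (taud k' a pp))).
  rewrite INR_expn S_INR.
  have base : INR a + 1 <= (3 * u / 5) ^ (if p == 2%N then 2 else 1)%N * exp (INR a / u * ln (INR p)).
    have y0 : 0 <= INR a / u by apply: Rmult_le_pos; [exact: pos_INR | apply: Rlt_le; apply: Rinv_0_lt_compat; lra].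
    have ya : INR a = INR a / u * u by field; lra.
    case: eqP => [p2e|pn2].
    + rewrite p2e /=. 
      apply: (Rle_trans _ ((3 * u / 5) ^ 2 * (1 + INR a / u / 2))).
        rewrite {1}ya Rplus_comm; exact: A2.
      by rewrite /= !Rmult_1_r; apply: Rmult_le_compat_l; [nra | exact: exp2].
    + have p3 : 3 <= INR p.
        have : (3 <= p)%N.
          have := prime_gt1 pp; rewrite leq_eqVlt => /orP [/eqP e|] //.
          by exfalso; apply: pn2; rewrite -e.
        by move/INR_le; rewrite /= ; lra.
      rewrite /= Rmult_1_r.
      apply: (Rle_trans _ ((3 * u / 5) * (1 + INR a / u / 2) ^ 2)).
        rewrite {1}ya Rplus_comm; exact: A3.
      apply: Rmult_le_compat_l; first lra.
      by apply: expq => //; apply: ln_ge1.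
  apply: (Rle_trans _ _ _ (pow_incr _ _ k' (conj (Rplus_le_le_0_compat _ _ (pos_INR a) Rle_0_1) base))).
  rewrite Rpow_mult_distr -pow_mult exp_powR mulnC.
  apply: Rmult_le_compat_l; first by apply: pow_le; lra.
  right; congr exp.
  have : INR k' = u * eps by rewrite /u ek S_INR; field; lra.
  move=> ->; field; lra.
- rewrite muln0 /= Rmult_1_l.
  apply: (Rle_trans _ _ _ (INR_le _ _ (taupow k a pp))).
  rewrite INR_expn.
  have -> : eps * (INR a * ln (INR p)) = INR a * (eps * ln (INR p)) by ring.
  rewrite -exp_powR; apply: pow_incr; split; first lra.
  have -> : INR k = Rpower (Rpower (INR k) (1 / eps)) eps.
    by rewrite Rpower_mult /Rdiv Rmult_1_l Rinv_l ?Rpower_1 //; lra.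
  apply: Rle_Rpower_l; first lra.
  split; [rewrite /Rpower; exact: exp_pos | lra].
Qed.

Lemma Cs1 K : Cs K 1 = 0%N.
Proof. by rewrite /Cs big_nil. Qed.

Lemma Cs_part K n : (1 < n)%N -> Cs K n = (cw K (pdiv n) + Cs K (n`_(pdiv n)^'))%N.
Proof. by move=> n1; rewrite /Cs sum_primes_part. Qed.

Lemma MI (k : nat) (hk : (2 <= k)%N) (eps : R) (heps0 : 0 < eps) (heps1 : eps <= (INR k - 1) / 6)
  n : (0 < n)%N ->
  INR (tau k n) <= (3 * (INR k - 1) / (5 * eps)) ^ (k.-1 * Cs (Rpower (INR k) (1 / eps)) n)%N
     * Rpower (INR n) eps.
Proof.
set B := 3 * (INR k - 1) / (5 * eps); set K := Rpower (INR k) (1 / eps).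
have k2 : 2 <= INR k by have := INR_le _ _ hk.
have B0 : 0 <= B by rewrite /B; apply: Rmult_le_pos; [lra | apply: Rlt_le; apply: Rinv_0_lt_compat; lra].
move: n; apply: part_ind.
  rewrite Cs1 muln0 /= Rmult_1_l /Rpower ln_1 Rmult_0_r exp_0.
  by have := INR_le _ _ (tau1 k).
move=> n n1 IH; have n0 : (0 < n)%N by apply: ltnW.
set p := pdiv n; have pp : prime p by apply: pdiv_prime.
set n' := n`_p^'.
apply: (Rle_trans _ _ _ (INR_le _ _ (tauc k p n0))).
rewrite INR_muln p_part.
apply: (Rle_trans _ ((B ^ (k.-1 * cw K p) * Rpower (INR (p ^ logn p n)) eps) *
   (B ^ (k.-1 * Cs K n') * Rpower (INR n') eps))).
  apply: Rmult_le_compat; try exact: pos_INR.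
    exact: PP.
  exact: IH.
have hp0 : 0 < INR (p ^ logn p n) by apply: lt_0_INR; apply/ltP; rewrite expn_gt0 prime_gt0.
have hn'0 : 0 < INR n' by apply: lt_0_INR; apply/ltP; apply: part_gt0.
right; rewrite (Cs_part K n n1) -/p -/n' mulnDr pow_add.
have -> : INR n = INR (p ^ logn p n) * INR n' by rewrite -INR_muln -p_part partnC.
rewrite -Rpower_mult_distr //; ring.
Qed.

Definition sm (K : R) (q : nat) : bool := if Rlt_dec (INR q) K then true else false.

Lemma sum_cw K (l : seq nat) :
  (\sum_(q <- l) cw K q = \sum_(q <- filter (sm K) l) (q == 2%N).+1)%N.
Proof.
elim: l => [|x l IH] /=; first by rewrite !big_nil.
rewrite big_cons IH /cw /sm; case: Rlt_dec => h //=.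
by rewrite big_cons; case: (x == 2%N).
Qed.

Lemma sum_w (l : seq nat) : (\sum_(q <- l) (q == 2%N).+1 = size l + count_mem 2%N l)%N.
Proof.
elim: l => [|x l IH] /=; first by rewrite big_nil.
rewrite big_cons IH /=; case: (x == 2%N); lia.
Qed.

Lemma max_in (l : seq nat) : l <> [::] -> exists2 M, M \in l & forall q, q \in l -> (q <= M)%N.
Proof.
elim: l => [|x l IH] // _.
case: l IH => [|y l] IH.
  by exists x; rewrite ?inE // => q; rewrite inE => /eqP ->.
have [M hM hle] := IH ltac:(by []).
case: (leqP x M) => hxM.
  exists M; first by rewrite inE hM orbT.
  by move=> q; rewrite inE => /orP [/eqP ->|] //; apply: hle.
exists x; first by rewrite inE eqxx.
move=> q; rewrite inE => /orP [/eqP ->|/hle h] //; apply: (leq_trans h); exact: ltnW.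
Qed.

Lemma Cs_bound K n : 0 < K -> INR (Cs K n) <= K.
Proof.
move=> K0; rewrite /Cs sum_cw sum_w.
set s := filter (sm K) (primes n).
have us : uniq s by rewrite filter_uniq // primes_uniq.
have hs : forall q, q \in s -> (2 <= q)%N /\ INR q < K.
  move=> q; rewrite mem_filter mem_primes /sm => /andP [].
  case: Rlt_dec => // h _ /andP [pq _]; split => //; exact: prime_gt1.
case: (eqVneq s [::]) => [->|sn]; first by rewrite /=; lra.
have [M hM hle] := @max_in s (elimN eqP sn).
have [M2 MK] := hs M hM.
apply: Rlt_le; apply: (Rle_lt_trans _ (INR M)) => //; apply: INR_le.
have h1 : (size s <= M.-1)%N.
  have := @uniq_leq_size _ s (iota 2 M.-1) us.
  rewrite size_iota; apply => q hq; rewrite mem_iota.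
  have [q2 _] := hs q hq; have := hle q hq; lia.
have h2 : (count_mem 2%N s <= 1)%N by rewrite count_uniq_mem // leq_b1.
lia.
Qed.

Theorem lemma3 (k : nat) (hk : (2 <= k)%N) (n : nat) (hn : (1 <= n)%N)
  (eps : R) (heps0 : 0 < eps) (heps1 : eps <= (INR k - 1) / 6) :
  INR (tau k n) <=
    Rmin (INR k ^ Omega n)
         (Rpower (3 * (INR k - 1) / (5 * eps))
                 (Rpower (INR k) (1 / eps) * (INR k - 1))
          * Rpower (INR n) eps).
Proof.
have k2 : 2 <= INR k by have := INR_le _ _ hk.
apply: Rmin_glb.
  by rewrite -INR_expn; apply: INR_le; apply: part1.
apply: (Rle_trans _ _ _ (MI k hk eps heps0 heps1 n hn)).
apply: Rmult_le_compat_r; first by rewrite /Rpower; apply: Rlt_le; apply: exp_pos.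
set B := 3 * (INR k - 1) / (5 * eps); set K := Rpower (INR k) (1 / eps).
have B1 : 1 <= B.
  have : 6 * eps <= INR k - 1 by lra.
  move=> h; rewrite /B; apply: (Rmult_le_reg_r (5 * eps)); first lra.
  rewrite /Rdiv Rmult_assoc Rinv_l; lra.
have K0 : 0 < K by rewrite /K /Rpower; apply: exp_pos.
rewrite -Rpower_pow; last lra.
apply: Rle_Rpower => //.
rewrite INR_muln.
have -> : INR k.-1 = INR k - 1.
  by case: (k) hk => [|k'] // _; rewrite succnK S_INR; ring.
rewrite Rmult_comm; apply: Rmult_le_compat_r; first lra.
exact: Cs_bound.
Qed.
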